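(* Let $h,n\geq2$. (i) If $U\leq G$ is regular maximal, then every $U$-symmetric social preference function $F$ satisfies $G(F)=U$. (ii) Every regular maximal subgroup of $G$ is a symmetry group with respect to $(h,n)$, and every symmetry group with respect to $(h,n)$ is regular. In particular, the set of symmetry groups with respect to $(h,n)$ is nonempty.
   Context: Permutations compose as $(\sigma\tau)(x)=\sigma(\tau(x))$. Let $G=S_h\times S_n$ and $\mathcal{P}=(S_n)^h$ (preference profiles), with $G$ acting by $(p^{(\varphi,\psi)})_i=\psi\,p_{\varphi^{-1}(i)}$. A subgroup $U\leq G$ is regular if for every $p\in\mathcal{P}$, $\mathrm{Stab}_U(p)=\{g\in U:p^g=p\}\subseteq S_h\times\{id\}$; it is regular maximal if it is regular and no regular subgroup of $G$ properly contains it. A social preference function (SPF) is any $F:\mathcal{P}\to S_n$; for $U\leq G$, $F$ is $U$-symmetric if $F(p^{(\varphi,\psi)})=\psi F(p)$ for all $p\in\mathcal{P}$ and $(\varphi,\psi)\in U$. The symmetry group of $F$ is $G(F)=\{(\varphi,\psi)\in G: F(p^{(\varphi,\psi)})=\psi F(p)\ \forall p\}$; $U$ is a symmetry group with respect to $(h,n)$ if $U=G(F)$ for some SPF $F$. *)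

(* Defs.v *)
From mathcomp Require Import all_boot all_fingroup.
Set Implicit Arguments. Unset Strict Implicit. Unset Printing Implicit Defensive.
Local Open Scope group_scope.

(* Composition in the paper's convention: (pcomp s t) x = s (t x).
   (In mathcomp, (t * s) x = s (t x).) *)
Definition pcomp (n : nat) (s t : {perm 'I_n}) : {perm 'I_n} := t * s.

Definition Gt (h n : nat) : finGroupType := ({perm 'I_h} * {perm 'I_n})%type.

Definition profile (h n : nat) : finType := {ffun 'I_h -> {perm 'I_n}}.

Definition pact (h n : nat) (p : profile h n) (g : Gt h n) : profile h n :=
  [ffun i => pcomp g.2 (p (g.1^-1 i))].

Definition regular (h n : nat) (U : {set Gt h n}) : Prop :=
  forall (p : profile h n) (g : Gt h n), g \in U -> pact p g = p -> g.2 = 1.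

Definition regular_maximal (h n : nat) (U : {group Gt h n}) : Prop :=
  regular U /\ ~ (exists V : {group Gt h n}, regular V /\ U \proper V).

Definition SPF (h n : nat) := profile h n -> {perm 'I_n}.

Definition symmetric_for (h n : nat) (U : {set Gt h n}) (F : SPF h n) : Prop :=
  forall (p : profile h n) (g : Gt h n), g \in U -> F (pact p g) = pcomp g.2 (F p).

Definition symgroup (h n : nat) (F : SPF h n) : {set Gt h n} :=
  [set g : Gt h n | [forall p : profile h n, F (pact p g) == pcomp g.2 (F p)]].

Definition is_symmetry_group (h n : nat) (U : {set Gt h n}) : Prop :=
  exists F : SPF h n, U = symgroup F.

(* Main.v *)
Require Import Defs.
From mathcomp Require Import all_boot all_fingroup.
Set Implicit Arguments. Unset Strict Implicit. Unset Printing Implicit Defensive.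
Local Open Scope group_scope.

Section S.
Variables h n : nat.

Lemma pactM (p : profile h n) (g k : Gt h n) : pact (pact p g) k = pact p (g * k).
Proof.
apply/ffunP => i; rewrite !ffunE /Defs.pcomp /=.
by rewrite invMg permM mulgA.
Qed.

Lemma pact1 (p : profile h n) : pact p 1 = p.
Proof. by apply/ffunP => i; rewrite !ffunE /Defs.pcomp /= invg1 perm1 mulg1. Qed.

Lemma symgroup_group (F : SPF h n) : group_set (symgroup F).
Proof.
apply/group_setP; split.
  by rewrite inE; apply/forallP => p; rewrite pact1 /Defs.pcomp mulg1.
move=> x y; rewrite !inE => /forallP Hx /forallP Hy; apply/forallP => p.
rewrite -pactM (eqP (Hy _)) (eqP (Hx _)) /Defs.pcomp /=.
by rewrite mulgA.
Qed.

Definition SG (F : SPF h n) : {group Gt h n} := Group (symgroup_group F).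

Lemma sym_regular (F : SPF h n) : regular (symgroup F).
Proof.
move=> p g; rewrite inE => /forallP /(_ p) /eqP E Hp.
move: E; rewrite Hp /Defs.pcomp => E.
by apply: (mulgI (F p)); rewrite mulg1 -E.
Qed.

Lemma part1 (U : {group Gt h n}) : regular_maximal U ->
     forall F : SPF h n, symmetric_for U F -> symgroup F = U.
Proof.
move=> [_ Hmax] F HF.
have sub : U \subset SG F.
  apply/subsetP => g gU; rewrite inE; apply/forallP => p.
  by rewrite HF.
apply/esym/eqP; apply/negPn/negP => ne.
apply: Hmax; exists (SG F); split; first exact: sym_regular.
by rewrite properEneq sub andbT.
Qed.

Section Build.
Variable U : {group Gt h n}.
Hypothesis Ureg : regular U.

Definition orb (p : profile h n) : {set profile h n} := [set pact p g | g in U].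
Definition rep (p : profile h n) : profile h n := odflt p [pick q in orb p].
Definition Fb (p : profile h n) : {perm 'I_n} :=
  match [pick g in U | pact (rep p) g == p] with Some g => g.2 | None => 1 end.

Lemma orb_self p : p \in orb p.
Proof. by apply/imsetP; exists 1; rewrite ?group1 ?pact1. Qed.

Lemma orb_act p k : k \in U -> orb (pact p k) = orb p.
Proof.
move=> kU; apply/setP => q; apply/imsetP/imsetP => [[g gU ->]|[g gU ->]].
  by exists (k * g); rewrite ?groupM // pactM.
exists (k^-1 * g); first by rewrite groupM ?groupV.
by rewrite pactM mulgA mulgV mul1g.
Qed.

Lemma rep_in p : rep p \in orb p.
Proof.
rewrite /rep; case: pickP => [q //|/(_ p)]; by rewrite orb_self.
Qed.

Lemma Fb_spec p : exists2 g, g \in U & pact (rep p) g = p /\ Fb p = g.2.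
Proof.
rewrite /Fb; case: pickP => [g /andP [gU /eqP E]|H]; first by exists g.
have /imsetP [g gU E] := rep_in p.
have := H g^-1; rewrite groupV gU E pactM mulgV pact1 eqxx //.
Qed.

Lemma uniq2 r g k : g \in U -> k \in U -> pact r g = pact r k -> g.2 = k.2.
Proof.
move=> gU kU E.
have : pact r (g * k^-1) = r by rewrite -pactM E pactM mulgV pact1.
move/(Ureg (groupM gU (groupVr kU))) => /= H.
by rewrite -[g.2]mulg1 -(mulVg k.2) mulgA H mul1g.
Qed.

Lemma Fb_sym : symmetric_for U Fb.
Proof.
move=> p k kU.
have [g gU [E1 E2]] := Fb_spec p.
have [g' g'U [E1' E2']] := Fb_spec (pact p k).
rewrite E2' E2 /Defs.pcomp.
have R : rep (pact p k) = rep p by rewrite /rep (orb_act _ kU); case: pickP => // /(_ p); rewrite orb_self.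
rewrite R in E1'.
have -> : g'.2 = (g * k).2.
  by apply: (@uniq2 (rep p) _ _ g'U (groupM gU kU)); rewrite E1' -pactM E1.
by [].
Qed.
End Build.

End S.

Theorem mainTheorem10 (h n : nat) (hh : 2 <= h) (hn : 2 <= n) :
  (forall U : {group Gt h n}, regular_maximal U ->
     forall F : SPF h n, symmetric_for U F -> symgroup F = U)
  /\ (forall U : {group Gt h n}, regular_maximal U -> is_symmetry_group U)
  /\ (forall U : {group Gt h n}, is_symmetry_group U -> regular U)
  /\ (exists U : {group Gt h n}, is_symmetry_group U).
Proof.
split; first exact: part1.
split.
  move=> U HU; exists (Fb U); apply/esym/part1 => //.
  exact: Fb_sym (proj1 HU).
split; first by move=> U [F ->]; exact: sym_regular.
by exists (SG (fun _ => 1)); exists (fun _ => 1).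
Qed.
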